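(* Let $h:(\mathbb{R}^n,0)\to(\mathbb{R}^n,0)$ be a bi-Lipschitz homeomorphism germ, and let $U,V\subset\mathbb{R}^n$ be closed cones with vertex $0$. Suppose that $h(U)$ satisfies condition (SSP). Then $D(h(U\cap V))=D(h(U))\cap D(h(V))$.
   Context: A cone with vertex $0$ is a set $C\subset\mathbb{R}^n$ with $tC\subseteq C$ for all $t\ge0$. For a set-germ $A\subset\mathbb{R}^n$ at $0$, $D(A)=\{a\in S^{n-1}:\exists\, x_i\in A\setminus\{0\},\ x_i\to0,\ x_i/\|x_i\|\to a\}$. For sequences, $\|u_m\|\ll\|v_m\|,\|w_m\|$ means $\|u_m\|/\|v_m\|\to0$ and $\|u_m\|/\|w_m\|\to0$. $A$ satisfies condition (SSP) if for every sequence $a_m\in\mathbb{R}^n$ tending to $0$ with $\lim a_m/\|a_m\|\in D(A)$ there is a sequence $b_m\in A$ with $\|a_m-b_m\|\ll\|a_m\|,\|b_m\|$. A bi-Lipschitz homeomorphism germ is a homeomorphism germ $h$ with $h(0)=0$ and constants $0<K_1\le K_2$ with $K_1\|x-y\|\le\|h(x)-h(y)\|\le K_2\|x-y\|$ near $0$. *)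

(* Defs.v *)
From HB Require Import structures.
From mathcomp Require Import all_boot all_order all_algebra.
From mathcomp Require Import all_classical all_reals all_analysis.
Set Implicit Arguments. Unset Strict Implicit. Unset Printing Implicit Defensive.
Import Order.TTheory GRing.Theory Num.Theory.
Import numFieldNormedType.Exports.
Local Open Scope classical_set_scope.
Local Open Scope ring_scope.

Section Defs.
Variables (R : realType) (n : nat).
Notation vec := 'rV[R]_n.

Definition enorm (x : vec) : R := Num.sqrt (\sum_(i < n) (x ord0 i) ^+ 2).

Definition eball0 (r : R) : set vec := [set x | enorm x < r].

Definition is_cone (C : set vec) : Prop :=
  forall t x, 0 <= t -> C x -> C (t *: x).

Definition Dir (A : set vec) : set vec :=
  [set a | enorm a = 1 /\
    exists x : nat -> vec,
      (forall m, A (x m) /\ x m != 0) /\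
      (x @ \oo --> (0 : vec)) /\
      ((fun m => (enorm (x m))^-1 *: x m) @ \oo --> a)].

Definition lsmall (u v : nat -> vec) : Prop :=
  forall e : R, 0 < e -> \forall m \near \oo, enorm (u m) <= e * enorm (v m).

Definition SSP (A : set vec) : Prop :=
  forall a : nat -> vec,
    a @ \oo --> (0 : vec) ->
    (exists2 l, Dir A l & (fun m => (enorm (a m))^-1 *: a m) @ \oo --> l) ->
    exists b : nat -> vec, (forall m, A (b m)) /\
      lsmall (fun m => a m - b m) a /\ lsmall (fun m => a m - b m) b.

(* h is a bi-Lipschitz homeomorphism germ, realized on the Euclidean ball of
   radius r: h 0 = 0, h is (K1,K2)-bi-Lipschitz on that ball, and h maps the
   ball homeomorphically onto an open neighbourhood of 0 (injectivity and
   bicontinuity follow from the bi-Lipschitz inequalities). *)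
Definition biLip_homeo_germ (h : vec -> vec) (r K1 K2 : R) : Prop :=
  0 < r /\ 0 < K1 /\ K1 <= K2 /\ h 0 = 0 /\
      (forall x y, eball0 r x -> eball0 r y ->
         K1 * enorm (x - y) <= enorm (h x - h y) /\
         enorm (h x - h y) <= K2 * enorm (x - y)) /\
      open (h @` eball0 r).

(* the set germ h(A) at 0, represented by h(A ∩ ball) *)
Definition germ_image (h : vec -> vec) (r : R) (A : set vec) : set vec :=
  h @` (A `&` eball0 r).

End Defs.

(* Main.v *)
Require Import Defs.
From HB Require Import structures.
From mathcomp Require Import all_boot all_order all_algebra.
From mathcomp Require Import all_classical all_reals all_analysis.
From mathcomp Require Import ring lra.
Import Order.TTheory GRing.Theory Num.Theory.
Import numFieldNormedType.Exports.
Local Open Scope classical_set_scope.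
Local Open Scope ring_scope.

Section Basics.
Context {R : realType} {n : nat}.
Notation vec := 'rV[R]_n.
Implicit Types x y z : vec.

Lemma enorm_ge0 x : 0 <= enorm x.
Proof. exact: sqrtr_ge0. Qed.

Lemma sumsq_ge0 x : 0 <= \sum_(i < n) (x ord0 i) ^+ 2.
Proof. by apply: sumr_ge0 => i _; exact: sqr_ge0. Qed.

Lemma enorm_sqr x : enorm x ^+ 2 = \sum_(i < n) (x ord0 i) ^+ 2.
Proof. by rewrite /enorm sqr_sqrtr // sumsq_ge0. Qed.

Lemma coord_le_enorm x i : `|x ord0 i| <= enorm x.
Proof.
rewrite -(ger0_norm (enorm_ge0 x)) -ler_sqr ?normr_ge0 //.
rewrite !real_normK ?num_real // enorm_sqr.
rewrite (bigD1 i) //= lerDl; apply: sumr_ge0 => j _; exact: sqr_ge0.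
Qed.

Lemma enorm0 : enorm (0 : vec) = 0.
Proof. by rewrite /enorm big1 ?sqrtr0 // => i _; rewrite mxE expr0n. Qed.

Lemma enorm_eq0 x : enorm x = 0 -> x = 0.
Proof.
move=> h0; apply/rowP => i; rewrite mxE.
have := coord_le_enorm x i; rewrite h0 => h1.
by apply/eqP; rewrite -normr_eq0 eq_le h1 normr_ge0.
Qed.

Lemma enormZ t x : enorm (t *: x) = `|t| * enorm x.
Proof.
rewrite /enorm (eq_bigr (fun i => t ^+ 2 * (x ord0 i) ^+ 2)); last first.
  by move=> i _; rewrite mxE exprMn.
by rewrite -mulr_sumr sqrtrM ?sqr_ge0 // sqrtr_sqr.
Qed.

Lemma enormN x : enorm (- x) = enorm x.
Proof. by rewrite -scaleN1r enormZ normrN1 mul1r. Qed.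

Lemma enormB x y : enorm (x - y) = enorm (y - x).
Proof. by rewrite -enormN opprB. Qed.

Lemma cauchy_schwarz x y :
  \sum_(i < n) x ord0 i * y ord0 i <= enorm x * enorm y.
Proof.
set s := \sum_(i < n) _.
have [y0|] := eqVneq (enorm y) 0.
  rewrite y0 mulr0 /s big1 // => i _.
  by rewrite (enorm_eq0 _ y0) mxE mulr0.
have [x0|] := eqVneq (enorm x) 0.
  rewrite x0 mul0r /s big1 // => i _.
  by rewrite (enorm_eq0 _ x0) mxE mul0r.
move=> xn0 yn0.
set a := enorm y; set b := enorm x.
have apos : 0 < a by rewrite lt0r yn0 enorm_ge0.
have bpos : 0 < b by rewrite lt0r xn0 enorm_ge0.
have H : 0 <= \sum_(i < n) (a * x ord0 i - b * y ord0 i) ^+ 2.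
  by apply: sumr_ge0 => i _; exact: sqr_ge0.
have E : \sum_(i < n) (a * x ord0 i - b * y ord0 i) ^+ 2 =
   a ^+ 2 * b ^+ 2 * 2 - (2 * a * b) * s.
  rewrite (eq_bigr (fun i => (a ^+ 2 * (x ord0 i) ^+ 2 + b ^+ 2 * (y ord0 i) ^+ 2)
       - (2 * a * b) * (x ord0 i * y ord0 i))); last by move=> i _; ring.
  rewrite sumrB big_split /= -!mulr_sumr /s -!enorm_sqr -/a -/b; ring.
rewrite E subr_ge0 in H.
have abpos : 0 < 2 * a * b by rewrite !mulr_gt0.
rewrite -(ler_pM2l abpos); apply: (le_trans H); rewrite le_eqVlt; apply/orP; left.
apply/eqP; ring.
Qed.

Lemma enormD x y : enorm (x + y) <= enorm x + enorm y.
Proof.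
rewrite -(ger0_norm (enorm_ge0 (x + y))) -(ger0_norm (addr_ge0 (enorm_ge0 x) (enorm_ge0 y))).
rewrite -ler_sqr ?normr_ge0 // !real_normK ?num_real // enorm_sqr.
rewrite (eq_bigr (fun i => (x ord0 i) ^+ 2 + (y ord0 i) ^+ 2 + 2 * (x ord0 i * y ord0 i))); last first.
  by move=> i _; rewrite mxE; ring.
rewrite !big_split /= -mulr_sumr -!enorm_sqr.
have := cauchy_schwarz x y => cs.
have : 2 * \sum_(i < n) x ord0 i * y ord0 i <= 2 * (enorm x * enorm y).
  by rewrite ler_pM2l.
move=> h2; apply: le_trans (lerD (lexx _) h2) _.
rewrite le_eqVlt; apply/orP; left; apply/eqP; ring.
Qed.

Lemma enormB_ge x y : enorm x - enorm y <= enorm (x - y).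
Proof.
rewrite lerBlDr; apply: le_trans (enormD _ _); by rewrite subrK.
Qed.

Lemma enorm_dist x y : `|enorm x - enorm y| <= enorm (x - y).
Proof.
rewrite ler_norml enormB_ge andbT lerNl opprB enormB; exact: enormB_ge.
Qed.

Lemma norm_le_enorm x : `|x| <= enorm x.
Proof.
rewrite [leLHS]/Num.Def.normr /= mx_normrE; apply/bigmax_leP; split; first exact: enorm_ge0.
by move=> [i j] _ /=; rewrite (ord1 i); exact: coord_le_enorm.
Qed.

Lemma coord_le_norm x i : `|x ord0 i| <= `|x|.
Proof.
rewrite [leRHS]/Num.Def.normr /= mx_normrE; apply/bigmax_geP; right.
by exists (ord0, i).
Qed.

Lemma enorm_le_norm x : enorm x <= n%:R * `|x|.
Proof.
have M0 : 0 <= `|x| by [].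
rewrite -(ger0_norm (enorm_ge0 x)) -(ger0_norm (mulr_ge0 (ler0n _ n) M0)).
rewrite -ler_sqr ?normr_ge0 // !real_normK ?num_real // enorm_sqr.
apply: (@le_trans _ _ (\sum_(i < n) `|x| ^+ 2)).
  apply: ler_sum => i _; rewrite -real_normK ?num_real //.
  by rewrite lerXn2r ?nnegrE ?normr_ge0 // coord_le_norm.
rewrite sumr_const card_ord -mulr_natl exprMn mulr1.
have hn : (n%:R : R) <= n%:R ^+ 2.
  by rewrite -natrX ler_nat; case: (n) => // k; rewrite expnS leq_pmulr.
rewrite -mulr_natl; have := sqr_ge0 `|x|; set M := `|x| ^+ 2; set N := (n%:R : R); nra.
Qed.

End Basics.
Section Conv.
Context {R : realType} {n : nat}.
Notation vec := 'rV[R]_n.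

Lemma small_n {e : R} : 0 < e -> n%:R * (e / (n%:R + 1)) <= e.
Proof.
move=> e0; have n1 : 0 < (n%:R : R) + 1 by rewrite ltr_wpDl.
rewrite mulrA ler_pdivrMr //; nra.
Qed.

Lemma cvg_enorm {T} {F : set_system T} {FF : Filter F} (f : T -> vec) (a : vec) :
  f @ F --> a -> forall e : R, 0 < e -> \forall t \near F, enorm (f t - a) <= e.
Proof.
move/cvgrPdist_le => H e e0.
have e1 : 0 < e / (n%:R + 1) by rewrite divr_gt0 // ltr_wpDl.
near=> t; apply: le_trans (enorm_le_norm _) _.
apply: le_trans _ (small_n e0); rewrite ler_wpM2l //.
rewrite -normrN opprB; near: t; exact: H.
Unshelve. all: by end_near.
Qed.

Lemma enorm_cvg {T} {F : set_system T} {FF : Filter F} (f : T -> vec) (a : vec) :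
  (forall e : R, 0 < e -> \forall t \near F, enorm (f t - a) <= e) -> f @ F --> a.
Proof.
move=> H; apply/cvgrPdist_le => e e0; near=> t.
rewrite -normrN opprB; apply: le_trans (norm_le_enorm _) _; near: t; exact: H.
Unshelve. all: by end_near.
Qed.

Lemma Dir_sub (A B : set vec) : A `<=` B -> Dir A `<=` Dir B.
Proof.
move=> AB a [a1 [x [Hx [x0 xa]]]]; split => //; exists x; split => //.
by move=> m; have [? ?] := Hx m; split => //; exact: AB.
Qed.

Lemma Dir_approx (A : set vec) a : enorm a = 1 ->
  (forall e, 0 < e -> exists z, A z /\ z != 0 /\ enorm z <= e /\
     enorm ((enorm z)^-1 *: z - a) <= e) -> Dir A a.
Proof.
move=> a1 H; split => //.
have /choice [z Hz] : forall k : nat, exists z, A z /\ z != 0 /\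
   enorm z <= k.+1%:R^-1 /\ enorm ((enorm z)^-1 *: z - a) <= k.+1%:R^-1.
  by move=> k; apply: H; rewrite invr_gt0.
exists z; split; first by move=> m; have [? [? _]] := Hz m.
split; apply: enorm_cvg => e e0; near=> k.
- rewrite subr0; have [_ [_ [h _]]] := Hz k; apply: le_trans h _.
  apply/ltW; near: k; exact: (near_infty_natSinv_lt (PosNum e0)).
- have [_ [_ [_ h]]] := Hz k; apply: le_trans h _.
  apply/ltW; near: k; exact: (near_infty_natSinv_lt (PosNum e0)).
Unshelve. all: by end_near.
Qed.

Lemma approx_claim (U V : set vec) : closed U -> closed V ->
  forall e, 0 < e -> exists2 d, 0 < d & forall x u, V x -> enorm x <= 1 ->
    U u -> enorm (x - u) <= d -> exists w, U w /\ V w /\ enorm (x - w) <= e.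
Proof.
move=> cU cV e e0; apply: contrapT => H.
have /choice [xu Hxu] : forall k : nat, exists p : vec * vec,
    V p.1 /\ enorm p.1 <= 1 /\ U p.2 /\ enorm (p.1 - p.2) <= k.+1%:R^-1 /\
    forall w, U w -> V w -> e < enorm (p.1 - w).
  move=> k; apply: contrapT => Hk; apply: H; exists k.+1%:R^-1 => //.
  move=> x u Vx x1 Uu xu; apply: contrapT => Hw; apply: Hk.
  exists (x, u); do 4!split => //.
  move=> w Uw Vw; rewrite ltNge; apply/negP => le; apply: Hw; by exists w.
set x := fun k => (xu k).1.
set K := V `&` [set y : vec | `|y| <= 1].
have cK : compact K.
  have bK : [bounded y | y in K].
    rewrite /bounded_near; near=> M => y [_ y1] /=.
    apply: le_trans y1 _; near: M; apply: nbhs_pinfty_ge; exact: num_real.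
  apply: bounded_closed_compact; first exact: bK.
  apply: closedI => //.
  move=> y cly; rewrite /= leNgt; apply/negP => y1.
  have r0 : 0 < `|y| - 1 by rewrite subr_gt0.
  have [z [z1 yz]] := cly _ (nbhsx_ballx y _ r0).
  move: yz; rewrite -ball_normE /ball_ /= => yz.
  have := lerB_dist y z; rewrite (lerBlDr (`|y|)) => h.
  move: z1 => /= z1.
  lra.
have FK : \forall k \near \oo, K (x k).
  apply: filterE => k; split; first by have [] := Hxu k.
  rewrite /=; apply: le_trans (norm_le_enorm _) _; by have [_ []] := Hxu k.
have [p [Kp clp]] := cK (x @ \oo) _ FK.
have Up : U p.
  apply: cU => B /nbhs_ballP [eps eps0 epsB].
  have e2 : 0 < eps / 2 by rewrite divr_gt0.
  have [y [[k kl ->] bk]] := clp [set y | exists2 k, k.+1%:R^-1 < eps / 2 & y = x k]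
      (ball p (eps / 2))
      (filterS (fun k kl => ex_intro2 _ _ k kl erefl) (near_infty_natSinv_lt (PosNum e2)))
      (nbhsx_ballx _ _ e2).
  exists (xu k).2; split; first by have [_ [_ [? _]]] := Hxu k.
  apply: epsB; move: bk; rewrite -!ball_normE /ball_ /= => bk.
  have [_ [_ [_ [hk _]]]] := Hxu k.
  apply: le_lt_trans (ler_distD (x k) _ _) _.
  have : `|x k - (xu k).2| <= eps / 2.
    apply: le_trans (norm_le_enorm _) _; apply: le_trans hk _; exact: ltW.
  move=> h2; rewrite (splitr eps); apply: ltr_leD => //.
have e1 : 0 < e / (n%:R + 1) by rewrite divr_gt0 // ltr_wpDl.
have Fr : \forall k \near \oo, [set y | exists k, y = x k] (x k).
  by apply: filterE => k; exists k.
have [y [[k ->] bk]] := clp _ (ball p (e / (n%:R + 1))) Fr (nbhsx_ballx _ _ e1).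
have [_ [_ [_ [_ hw]]]] := Hxu k.
have := hw p Up Kp.1; rewrite ltNge => /negP; apply.
apply: le_trans (enorm_le_norm _) _; apply: le_trans _ (small_n e0).
rewrite ler_wpM2l // -normrN opprB; move: bk; rewrite -ball_normE /ball_ /=.
exact: ltW.
Unshelve. all: by end_near.
Qed.

End Conv.
Section Dirs.
Context {R : realType} {n : nat}.
Notation vec := 'rV[R]_n.

Lemma enorm_tri (p q s : vec) : enorm (p - q) <= enorm (p - s) + enorm (s - q).
Proof.
by apply: le_trans (enormD _ _); rewrite addrA subrK.
Qed.

Lemma enorm_gt0 {y : vec} : y != 0 -> 0 < enorm y.
Proof.
move=> y0; rewrite lt0r enorm_ge0 andbT; apply/eqP => /enorm_eq0 e0.
by move: y0; rewrite e0 eqxx.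
Qed.

Lemma dir_diff (y z : vec) : y != 0 -> z != 0 ->
  enorm ((enorm z)^-1 *: z - (enorm y)^-1 *: y) <= 2 * (enorm (z - y) / enorm y).
Proof.
move=> y0 z0; have ap := enorm_gt0 y0; have bp := enorm_gt0 z0.
set a := enorm y; set b := enorm z.
have -> : b^-1 *: z - a^-1 *: y = a^-1 *: (z - y) + (b^-1 - a^-1) *: z.
  apply/rowP => i; rewrite !mxE; ring.
apply: le_trans (enormD _ _) _; rewrite !enormZ -/b.
have -> : `|b^-1 - a^-1| * b = `|a - b| / a.
  have -> : b^-1 - a^-1 = (a - b) / (a * b) by field; rewrite ?gt_eqF.
  rewrite normrM normfV normrM (gtr0_norm ap) (gtr0_norm bp).
  rewrite -/a -/b; field; by rewrite ?gt_eqF.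
have hab : `|a - b| <= enorm (z - y) by rewrite -/a -/b distrC enorm_dist.
have ia : 0 < a^-1 by rewrite invr_gt0.
rewrite (gtr0_norm ia) mulrC.
rewrite [_ / a]mulrC.
rewrite mulr_natl mulr2n lerD2l mulrC; by rewrite ler_pM2r.
Qed.

End Dirs.

Theorem proposition2p29 (R : realType) (n : nat) (h : 'rV[R]_n -> 'rV[R]_n)
  (r K1 K2 : R) (U V : set 'rV[R]_n) :
  biLip_homeo_germ h r K1 K2 ->
  closed U -> is_cone U -> closed V -> is_cone V ->
  SSP (germ_image h r U) ->
  Dir (germ_image h r (U `&` V)) =
    Dir (germ_image h r U) `&` Dir (germ_image h r V).
Proof.
move=> [r0 [K10 [K12 [h0 [hL _]]]]] cU coU cV coV ssp.
have K20 : 0 < K2 by apply: lt_le_trans K12.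
apply/seteqP; split.
  move=> a Ha; split; apply: (Dir_sub _ _ _ a Ha) => y [x [[Ux Vx] bx] hx];
  by exists x.
move=> a [HaU HaV].
have a1 : enorm a = 1 by case: HaU.
case: HaV => _ [y [Hy [y0 ya]]].
have /choice [v Hv] : forall m, exists v, (V v /\ eball0 r v) /\ h v = y m.
  move=> m; have [[v [Vv bv] hv] _] := Hy m; by exists v.
have [b [Hb [lyb _]]] := ssp y y0 (ex_intro2 _ _ a HaU ya).
have /choice [u Hu] : forall m, exists u, (U u /\ eball0 r u) /\ h u = b m.
  move=> m; have [u [Uu bu] hu] := Hb m; by exists u.
have b00 : eball0 r (0 : 'rV[R]_n) by rewrite /eball0 /= enorm0.
apply: Dir_approx => // e e0.
pose rho := e / (4 * (e + 1)).
have rhoE : rho * (4 * (e + 1)) = e by rewrite /rho mulfVK // gt_eqF //; lra.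
have rho0 : 0 < rho by rewrite /rho divr_gt0 //; lra.
have rho4 : rho <= 1 / 4 by nra.
have rhoe : 4 * rho <= e by nra.
pose th := K1 * rho / K2.
have thE : K2 * th = K1 * rho by rewrite /th mulrC mulfVK // gt_eqF.
have th0 : 0 < th by rewrite /th divr_gt0 // mulr_gt0.
have th1 : th <= 1 by nra.
have [dl dl0 Hcl] := approx_claim _ _ cU cV _ th0.
pose et := dl * K1 / K2.
have etE : K2 * et = dl * K1 by rewrite /et mulrC mulfVK // gt_eqF.
have et0 : 0 < et by rewrite /et divr_gt0 // mulr_gt0.
have e20 : 0 < e / 2 by rewrite divr_gt0.
have rK0 : 0 < r * K1 / 4 by rewrite divr_gt0 // mulr_gt0.
have : \forall m \near \oo, enorm (y m - b m) <= et * enorm (y m) /\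
   enorm ((enorm (y m))^-1 *: y m - a) <= e / 2 /\
   enorm (y m - 0) <= e / 2 /\ enorm (y m - 0) <= r * K1 / 4.
  near=> m; split; [|split; [|split]].
  - near: m; exact: lyb.
  - near: m; exact: cvg_enorm ya _ e20.
  - near: m; exact: cvg_enorm y0 _ e20.
  - near: m; exact: cvg_enorm y0 _ rK0.
case/filter_ex => m [H1 [H2 [H3 H4]]].
move: H3 H4; rewrite subr0 => H3 H4.
have [[Vv bv] hv] := Hv m; have [[Uu bu] hu] := Hu m.
have [_ ym0] := Hy m.
set Y := y m in H1 H2 H3 H4 hv ym0.
set vm := v m in Vv bv hv; set um := u m in Uu bu hu.
have Yp := enorm_gt0 ym0.
have [L1 L2] := hL vm 0 bv b00.
rewrite !subr0 h0 subr0 hv in L1 L2.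
set t := enorm vm in L1 L2.
have tp : 0 < t by nra.
have [L3 _] := hL vm um bv bu.
rewrite hv hu in L3.
have vu : enorm (vm - um) <= dl * t.
  have : K1 * enorm (vm - um) <= K1 * (dl * t) by nra.
  by rewrite ler_pM2l.
have it0 : 0 <= t^-1 by rewrite invr_ge0 ltW.
have [w' [Uw' [Vw' xw']]] : exists w, U w /\ V w /\ enorm (t^-1 *: vm - w) <= th.
  apply: (Hcl _ (t^-1 *: um)).
  - exact: coV.
  - by rewrite enormZ ger0_norm // mulVf // gt_eqF.
  - exact: coU.
  - rewrite -scalerBr enormZ ger0_norm //.
    by rewrite ler_pdivrMl // mulrC.
pose w := t *: w'.
have Uw : U w by apply: coU => //; exact: ltW.
have Vw : V w by apply: coV => //; exact: ltW.
have vw : enorm (vm - w) <= th * t.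
  have -> : vm - w = t *: (t^-1 *: vm - w').
    by rewrite scalerBr scalerA mulfV ?gt_eqF // scale1r.
  by rewrite enormZ gtr0_norm // mulrC ler_pM2r.
have bw : eball0 r w.
  rewrite /eball0 /=.
  have := enorm_tri w 0 vm; rewrite !subr0 enormB => hw.
  apply: le_lt_trans hw _.
  have : 2 * t <= r / 2.
    have : K1 * (2 * t) <= K1 * (r / 2) by nra.
    by rewrite ler_pM2l.
  rewrite -/t => h2t; nra.
have [_ L5] := hL w vm bw bv; rewrite hv in L5.
set z := h w in L5.
have zY : enorm (z - Y) <= rho * enorm Y.
  apply: le_trans L5 _; rewrite enormB.
  have : K2 * enorm (vm - w) <= K2 * (th * t) by rewrite ler_pM2l.
  move=> h6; apply: le_trans h6 _; rewrite mulrA thE; nra.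
have z0 : z != 0.
  apply/eqP => z0; move: zY; rewrite z0 sub0r enormN => h7; nra.
exists z; split; first by exists w.
split => //; split.
  have := enorm_tri z 0 Y; rewrite !subr0 => h8; nra.
have := enorm_tri ((enorm z)^-1 *: z) a ((enorm Y)^-1 *: Y) => h9.
apply: le_trans h9 _.
have := dir_diff _ _ ym0 z0 => h10.
have h11 : enorm (z - Y) / enorm Y <= rho by rewrite ler_pdivrMr.
nra.
Unshelve. all: by end_near.
Qed.
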